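(* Let $\lambda>0$, $D=\lambda\mathbb I_3$, and $G=\widetilde W_{1,0}(\cdot;D)\circ\mathbf P:S^3\to\mathbb R$. The critical points of $G$ are exactly: $(\pm1,0,0,0)$ (value $3(\lambda-1)^2$); all $(0,q_1,q_2,q_3)$ with $q_1^2+q_2^2+q_3^2=1$ (value $3\lambda^2+2\lambda+3$); and, if $\lambda>1$, all $\big(\pm\sqrt{\tfrac{\lambda+1}{2\lambda}},q_1,q_2,q_3\big)$ with $q_1^2+q_2^2+q_3^2=\tfrac{\lambda-1}{2\lambda}$ (value $(\lambda-1)^2$). Moreover: (i) The points $(0,q_1,q_2,q_3)$, $q_1^2+q_2^2+q_3^2=1$, are the global maxima of $G$; equivalently, the global maxima of $\widetilde W_{1,0}(\cdot;D)$ on $SO(3)$ are the rotations $2uu^T-\mathbb I_3$, $u\in\mathbb R^3$, $\|u\|=1$ (rotations by angle $\pi$). (ii) If $\lambda\le1$, $(\pm1,0,0,0)$ are the global minima of $G$, and $\mathbb I_3$ is the global minimum of $\widetilde W_{1,0}(\cdot;D)$. (iii) If $\lambda>1$, the points $\big(\pm\sqrt{\tfrac{\lambda+1}{2\lambda}},q_1,q_2,q_3\big)$ with $q_1^2+q_2^2+q_3^2=\tfrac{\lambda-1}{2\lambda}$ are exactly the global minima of $G$; equivalently, the global minima of $\widetilde W_{1,0}(\cdot;D)$ on $SO(3)$ are exactly the rotations $R$ with $\mathrm{tr}\,R=1+\frac2\lambda$ (rotations by angle $\arccos(1/\lambda)$ about an arbitrary axis).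
   Context: $\mathrm{sym}(Y)=\tfrac12(Y+Y^T)$, $\|Y\|^2=\mathrm{tr}(Y^TY)$. $\widetilde W_{1,0}(R;D)=\|\mathrm{sym}(R^TD-\mathbb I_3)\|^2$ for $R\in SO(3)$. $S^3\subset\mathbb R^4$ is the unit sphere and $\mathbf P:S^3\to SO(3)$ is $$\mathbf P(q)=\begin{pmatrix}(q^0)^2+(q^1)^2-(q^2)^2-(q^3)^2 & 2(q^1q^2-q^0q^3) & 2(q^1q^3+q^0q^2)\\ 2(q^1q^2+q^0q^3) & (q^0)^2-(q^1)^2+(q^2)^2-(q^3)^2 & 2(q^2q^3-q^0q^1)\\ 2(q^1q^3-q^0q^2) & 2(q^2q^3+q^0q^1) & (q^0)^2-(q^1)^2-(q^2)^2+(q^3)^2\end{pmatrix},$$ for $q=(q^0,q^1,q^2,q^3)\in S^3$. Critical points are those of $G$ as a function on the manifold $S^3$. *)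

(* Defs.v *)
From Stdlib Require Import Reals Lra.
Open Scope R_scope.

(* 3x3 real matrices as functions on indices 0,1,2 (entries outside are ignored). *)
Definition Mat3 := nat -> nat -> R.

Definition sum3 (f : nat -> R) : R := f 0%nat + f 1%nat + f 2%nat.
Definition mmul (A B : Mat3) : Mat3 := fun i j => sum3 (fun k => A i k * B k j).
Definition mtrans (A : Mat3) : Mat3 := fun i j => A j i.
Definition I3 : Mat3 := fun i j => if Nat.eqb i j then 1 else 0.
Definition madd (A B : Mat3) : Mat3 := fun i j => A i j + B i j.
Definition msub (A B : Mat3) : Mat3 := fun i j => A i j - B i j.
Definition mscale (c : R) (A : Mat3) : Mat3 := fun i j => c * A i j.
Definition mtrace (A : Mat3) : R := sum3 (fun i => A i i).
Definition msym (Y : Mat3) : Mat3 := mscale (1/2) (madd Y (mtrans Y)).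
Definition fnorm2 (Y : Mat3) : R := mtrace (mmul (mtrans Y) Y).
Definition det3 (A : Mat3) : R :=
  A 0%nat 0%nat * (A 1%nat 1%nat * A 2%nat 2%nat - A 1%nat 2%nat * A 2%nat 1%nat)
  - A 0%nat 1%nat * (A 1%nat 0%nat * A 2%nat 2%nat - A 1%nat 2%nat * A 2%nat 0%nat)
  + A 0%nat 2%nat * (A 1%nat 0%nat * A 2%nat 1%nat - A 1%nat 1%nat * A 2%nat 0%nat).
Definition mat_eq (A B : Mat3) : Prop :=
  forall i j : nat, (i < 3)%nat -> (j < 3)%nat -> A i j = B i j.
Definition in_SO3 (A : Mat3) : Prop := mat_eq (mmul (mtrans A) A) I3 /\ det3 A = 1.

Definition W10 (Rm D : Mat3) : R := fnorm2 (msym (msub (mmul (mtrans Rm) D) I3)).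

Record R4 := mkR4 { q0 : R; q1 : R; q2 : R; q3 : R }.
Definition dot4 (p q : R4) : R := q0 p * q0 q + q1 p * q1 q + q2 p * q2 q + q3 p * q3 q.
Definition add4 (p q : R4) : R4 := mkR4 (q0 p + q0 q) (q1 p + q1 q) (q2 p + q2 q) (q3 p + q3 q).
Definition scale4 (c : R) (p : R4) : R4 := mkR4 (c * q0 p) (c * q1 p) (c * q2 p) (c * q3 p).
Definition normalize4 (p : R4) : R4 := scale4 (/ sqrt (dot4 p p)) p.
Definition on_S3 (q : R4) : Prop := q0 q ^ 2 + q1 q ^ 2 + q2 q ^ 2 + q3 q ^ 2 = 1.

Definition Pmat (q : R4) : Mat3 := fun i j =>
  let a := q0 q in let b := q1 q in let c := q2 q in let d := q3 q in
  match i, j with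
  | 0%nat, 0%nat => a^2 + b^2 - c^2 - d^2
  | 0%nat, 1%nat => 2 * (b * c - a * d)
  | 0%nat, 2%nat => 2 * (b * d + a * c)
  | 1%nat, 0%nat => 2 * (b * c + a * d)
  | 1%nat, 1%nat => a^2 - b^2 + c^2 - d^2
  | 1%nat, 2%nat => 2 * (c * d - a * b)
  | 2%nat, 0%nat => 2 * (b * d - a * c)
  | 2%nat, 1%nat => 2 * (c * d + a * b)
  | 2%nat, 2%nat => a^2 - b^2 - c^2 + d^2
  | _, _ => 0
  end.

Definition Gfun (lam : R) (q : R4) : R := W10 (Pmat q) (mscale lam I3).

(* q in S^3 is a critical point of G (as a function on the manifold S^3):
   for every tangent vector v (v . q = 0), the derivative at t = 0 of G along
   the curve t |-> (q + t v)/|q + t v| in S^3 (which has velocity v at t = 0)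
   vanishes, i.e. dG_q = 0 on T_q S^3. *)
Definition critical_S3 (f : R4 -> R) (q : R4) : Prop :=
  on_S3 q /\
  forall v : R4, dot4 q v = 0 ->
    derivable_pt_lim (fun t => f (normalize4 (add4 q (scale4 t v)))) 0 0.

Definition is_gmax_S3 (f : R4 -> R) (q : R4) : Prop :=
  on_S3 q /\ forall p, on_S3 p -> f p <= f q.
Definition is_gmin_S3 (f : R4 -> R) (q : R4) : Prop :=
  on_S3 q /\ forall p, on_S3 p -> f q <= f p.
Definition is_gmax_SO3 (f : Mat3 -> R) (A : Mat3) : Prop :=
  in_SO3 A /\ forall B, in_SO3 B -> f B <= f A.
Definition is_gmin_SO3 (f : Mat3 -> R) (A : Mat3) : Prop :=
  in_SO3 A /\ forall B, in_SO3 B -> f A <= f B.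

Definition half_turn (u0 u1 u2 : R) : Mat3 := fun i j =>
  let u := fun k => match k with 0%nat => u0 | 1%nat => u1 | _ => u2 end in
  2 * u i * u j - I3 i j.

(* Main.v *)
Require Import Defs.
From Stdlib Require Import Reals Lra Psatz Lia.
From Coquelicot Require Import Coquelicot.
Open Scope R_scope.

Definition fT (lam t : R) := lam^2*(t^2 - 2*t + 3)/2 - 2*lam*t + 3.

Lemma G_gen lam q : let n := dot4 q q in let t := 4*q0 q^2 - n in
  Gfun lam q = lam^2*(3*n^2 + t^2 - 2*n*t)/2 - 2*lam*t + 3.
Proof. destruct q as [a b c d]. unfold Gfun, W10, fnorm2, msym, msub, mmul, mtrans, mscale, madd, mtrace, sum3, I3, Pmat, dot4. simpl. field. Qed.

Lemma on_S3_G lam q : on_S3 q -> Gfun lam q = fT lam (4*q0 q^2 - 1).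
Proof. intro H. rewrite G_gen. assert (E : dot4 q q = 1).
  { destruct q; unfold on_S3, dot4 in *; simpl in *; lra. }
  cbv zeta. rewrite E. unfold fT. field. Qed.

Lemma normalize_on p : 0 < dot4 p p -> on_S3 (normalize4 p).
Proof. intro H. unfold normalize4, scale4, on_S3. simpl.
  assert (Hs : sqrt (dot4 p p) * sqrt (dot4 p p) = dot4 p p) by (apply sqrt_sqrt; lra).
  assert (Hp : 0 < sqrt (dot4 p p)) by (apply sqrt_lt_R0; lra).
  destruct p as [a b c d]; unfold dot4 in *; simpl in *.
  set (s := sqrt (a*a+b*b+c*c+d*d)) in *.
  match goal with |- ?L = 1 => replace L with ((a*a+b*b+c*c+d*d) / (s*s)) by (field; lra) end.
  rewrite Hs. field. lra. Qed.

Lemma deriv_G lam q v : on_S3 q -> dot4 q v = 0 ->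
  derivable_pt_lim (fun t => Gfun lam (normalize4 (add4 q (scale4 t v)))) 0
    (8*lam*(lam*(4*q0 q^2 - 2) - 2) * q0 q * q0 v).
Proof. intros Hq Hv. apply is_derive_Reals.
  set (w := dot4 v v).
  assert (HN : forall t, dot4 (add4 q (scale4 t v)) (add4 q (scale4 t v)) = 1 + t^2*w).
  { intro t. destruct q as [a b c d]; destruct v as [x y z u]; unfold w, dot4, on_S3, add4, scale4 in *; cbn [q0 q1 q2 q3] in *.
    replace ((a + t * x) * (a + t * x) + (b + t * y) * (b + t * y) + (c + t * z) * (c + t * z) + (d + t * u) * (d + t * u))
      with ((a^2+b^2+c^2+d^2) + 2*t*(a*x+b*y+c*z+d*u) + t^2*(x*x+y*y+z*z+u*u)) by ring.
    rewrite Hq, Hv. ring. }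
  apply is_derive_ext with (f := fun t => fT lam (4*((/ sqrt (1 + t^2*w)) * (q0 q + t*q0 v))^2 - 1)).
  { intro t. rewrite on_S3_G.
    - unfold normalize4. rewrite HN. reflexivity.
    - apply normalize_on. rewrite HN. assert (0 <= w) by (unfold w, dot4; nra). nra. }
  unfold fT. auto_derive; replace (1 + 0*(0*1)*w) with 1 by ring; rewrite sqrt_1.
  - repeat split; lra.
  - field.
Qed.

Definition rels (a b c d e f g h i : R) : Prop :=
  (a*a+d*d+g*g = 1 /\ b*b+e*e+h*h = 1 /\ c*c+f*f+i*i = 1 /\
   a*b+d*e+g*h = 0 /\ a*c+d*f+g*i = 0 /\ b*c+e*f+h*i = 0) /\
  (a*a+b*b+c*c = 1 /\ d*d+e*e+f*f = 1 /\ g*g+h*h+i*i = 1 /\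
   a*d+b*e+c*f = 0 /\ a*g+b*h+c*i = 0 /\ d*g+e*h+f*i = 0) /\
  (e*i-f*h = a /\ c*h-b*i = d /\ b*f-c*e = g /\
   f*g-d*i = b /\ a*i-c*g = e /\ c*d-a*f = h /\
   d*h-e*g = c /\ b*g-a*h = f /\ a*e-b*d = i).
Lemma rels_of a b c d e f g h i :
  a*a+d*d+g*g - 1 = 0 -> b*b+e*e+h*h - 1 = 0 -> c*c+f*f+i*i - 1 = 0 ->
  a*b+d*e+g*h = 0 -> a*c+d*f+g*i = 0 -> b*c+e*f+h*i = 0 ->
  a*(e*i-f*h) - b*(d*i-f*g) + c*(d*h-e*g) - 1 = 0 ->
  rels a b c d e f g h i.
Proof.
  intros H00 H11 H22 H01 H02 H12 Hd.
  assert (A00 : (e*i-f*h) - a = 0).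
  { replace ((e*i-f*h) - a) with (a*(a*(e*i-f*h) - b*(d*i-f*g) + c*(d*h-e*g) - 1) - ((a*a+d*d+g*g - 1)*(e*i-f*h) + (a*b+d*e+g*h)*(-(d*i-f*g)) + (a*c+d*f+g*i)*(d*h-e*g))) by ring.
    rewrite ?H00, ?H11, ?H22, ?H01, ?H02, ?H12, ?Hd; ring. }
  assert (A01 : (-(b*i-c*h)) - d = 0).
  { replace ((-(b*i-c*h)) - d) with (d*(a*(e*i-f*h) - b*(d*i-f*g) + c*(d*h-e*g) - 1) - ((a*a+d*d+g*g - 1)*(-(b*i-c*h)) + (a*b+d*e+g*h)*(a*i-c*g) + (a*c+d*f+g*i)*(-(a*h-b*g)))) by ring.
    rewrite ?H00, ?H11, ?H22, ?H01, ?H02, ?H12, ?Hd; ring. }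
  assert (A02 : (b*f-c*e) - g = 0).
  { replace ((b*f-c*e) - g) with (g*(a*(e*i-f*h) - b*(d*i-f*g) + c*(d*h-e*g) - 1) - ((a*a+d*d+g*g - 1)*(b*f-c*e) + (a*b+d*e+g*h)*(-(a*f-c*d)) + (a*c+d*f+g*i)*(a*e-b*d))) by ring.
    rewrite ?H00, ?H11, ?H22, ?H01, ?H02, ?H12, ?Hd; ring. }
  assert (A10 : (-(d*i-f*g)) - b = 0).
  { replace ((-(d*i-f*g)) - b) with (b*(a*(e*i-f*h) - b*(d*i-f*g) + c*(d*h-e*g) - 1) - ((a*b+d*e+g*h)*(e*i-f*h) + (b*b+e*e+h*h - 1)*(-(d*i-f*g)) + (b*c+e*f+h*i)*(d*h-e*g))) by ring.
    rewrite ?H00, ?H11, ?H22, ?H01, ?H02, ?H12, ?Hd; ring. }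
  assert (A11 : (a*i-c*g) - e = 0).
  { replace ((a*i-c*g) - e) with (e*(a*(e*i-f*h) - b*(d*i-f*g) + c*(d*h-e*g) - 1) - ((a*b+d*e+g*h)*(-(b*i-c*h)) + (b*b+e*e+h*h - 1)*(a*i-c*g) + (b*c+e*f+h*i)*(-(a*h-b*g)))) by ring.
    rewrite ?H00, ?H11, ?H22, ?H01, ?H02, ?H12, ?Hd; ring. }
  assert (A12 : (-(a*f-c*d)) - h = 0).
  { replace ((-(a*f-c*d)) - h) with (h*(a*(e*i-f*h) - b*(d*i-f*g) + c*(d*h-e*g) - 1) - ((a*b+d*e+g*h)*(b*f-c*e) + (b*b+e*e+h*h - 1)*(-(a*f-c*d)) + (b*c+e*f+h*i)*(a*e-b*d))) by ring.
    rewrite ?H00, ?H11, ?H22, ?H01, ?H02, ?H12, ?Hd; ring. }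
  assert (A20 : (d*h-e*g) - c = 0).
  { replace ((d*h-e*g) - c) with (c*(a*(e*i-f*h) - b*(d*i-f*g) + c*(d*h-e*g) - 1) - ((a*c+d*f+g*i)*(e*i-f*h) + (b*c+e*f+h*i)*(-(d*i-f*g)) + (c*c+f*f+i*i - 1)*(d*h-e*g))) by ring.
    rewrite ?H00, ?H11, ?H22, ?H01, ?H02, ?H12, ?Hd; ring. }
  assert (A21 : (-(a*h-b*g)) - f = 0).
  { replace ((-(a*h-b*g)) - f) with (f*(a*(e*i-f*h) - b*(d*i-f*g) + c*(d*h-e*g) - 1) - ((a*c+d*f+g*i)*(-(b*i-c*h)) + (b*c+e*f+h*i)*(a*i-c*g) + (c*c+f*f+i*i - 1)*(-(a*h-b*g)))) by ring.
    rewrite ?H00, ?H11, ?H22, ?H01, ?H02, ?H12, ?Hd; ring. }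
  assert (A22 : (a*e-b*d) - i = 0).
  { replace ((a*e-b*d) - i) with (i*(a*(e*i-f*h) - b*(d*i-f*g) + c*(d*h-e*g) - 1) - ((a*c+d*f+g*i)*(b*f-c*e) + (b*c+e*f+h*i)*(-(a*f-c*d)) + (c*c+f*f+i*i - 1)*(a*e-b*d))) by ring.
    rewrite ?H00, ?H11, ?H22, ?H01, ?H02, ?H12, ?Hd; ring. }
  assert (B00 : a*a+b*b+c*c - 1 = 0).
  { replace (a*a+b*b+c*c - 1) with ((a*(e*i-f*h) - b*(d*i-f*g) + c*(d*h-e*g) - 1) - (a*((e*i-f*h) - a) + b*((-(d*i-f*g)) - b) + c*((d*h-e*g) - c))) by ring.
    rewrite ?A00, ?A10, ?A20, ?Hd; ring. }
  assert (B01 : a*d+b*e+c*f = 0).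
  { replace (a*d+b*e+c*f) with (0 - (a*((-(b*i-c*h)) - d) + b*((a*i-c*g) - e) + c*((-(a*h-b*g)) - f))) by ring.
    rewrite ?A01, ?A11, ?A21, ?Hd; ring. }
  assert (B02 : a*g+b*h+c*i = 0).
  { replace (a*g+b*h+c*i) with (0 - (a*((b*f-c*e) - g) + b*((-(a*f-c*d)) - h) + c*((a*e-b*d) - i))) by ring.
    rewrite ?A02, ?A12, ?A22, ?Hd; ring. }
  assert (B11 : d*d+e*e+f*f - 1 = 0).
  { replace (d*d+e*e+f*f - 1) with ((a*(e*i-f*h) - b*(d*i-f*g) + c*(d*h-e*g) - 1) - (d*((-(b*i-c*h)) - d) + e*((a*i-c*g) - e) + f*((-(a*h-b*g)) - f))) by ring.
    rewrite ?A01, ?A11, ?A21, ?Hd; ring. }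
  assert (B12 : d*g+e*h+f*i = 0).
  { replace (d*g+e*h+f*i) with (0 - (d*((b*f-c*e) - g) + e*((-(a*f-c*d)) - h) + f*((a*e-b*d) - i))) by ring.
    rewrite ?A02, ?A12, ?A22, ?Hd; ring. }
  assert (B22 : g*g+h*h+i*i - 1 = 0).
  { replace (g*g+h*h+i*i - 1) with ((a*(e*i-f*h) - b*(d*i-f*g) + c*(d*h-e*g) - 1) - (g*((b*f-c*e) - g) + h*((-(a*f-c*d)) - h) + i*((a*e-b*d) - i))) by ring.
    rewrite ?A02, ?A12, ?A22, ?Hd; ring. }

  unfold rels; repeat split; lra.
Qed.

Lemma qid a b c d e f g h i : rels a b c d e f g h i ->
  (1+a+e+i)*(1+a-e-i) = (h-f)^2 /\ (1+a+e+i)*(1-a+e-i) = (c-g)^2 /\ (1+a+e+i)*(1-a-e+i) = (d-b)^2 /\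
  (1+a-e-i)*(1-a+e-i) = (b+d)^2 /\ (1+a-e-i)*(1-a-e+i) = (c+g)^2 /\ (1-a+e-i)*(1-a-e+i) = (f+h)^2 /\
  (1+a-e-i)*(f+h) = (b+d)*(c+g) /\ (1-a+e-i)*(c+g) = (b+d)*(f+h) /\ (1-a-e+i)*(b+d) = (c+g)*(f+h) /\
  ((a+a)/2)^2 + ((b+d)/2)^2*2 + ((c+g)/2)^2*2 + ((e+e)/2)^2 + ((f+h)/2)^2*2 + ((i+i)/2)^2
    = (3 + (a+e+i)^2 - 2*(a+e+i))/2.
Proof. intros [[? [? [? [? [? ?]]]]] [[? [? [? [? [? ?]]]]] [? [? [? [? [? [? [? [? ?]]]]]]]]]].
  repeat split; lra. Qed.

Definition Qm (Rm : Mat3) := (((Rm 0%nat 0%nat) + (Rm 0%nat 0%nat))/2)^2 + (((Rm 0%nat 1%nat) + (Rm 1%nat 0%nat))/2)^2 * 2 + (((Rm 0%nat 2%nat) + (Rm 2%nat 0%nat))/2)^2*2 + (((Rm 1%nat 1%nat) + (Rm 1%nat 1%nat))/2)^2 + (((Rm 1%nat 2%nat) + (Rm 2%nat 1%nat))/2)^2*2 + (((Rm 2%nat 2%nat) + (Rm 2%nat 2%nat))/2)^2.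

Lemma W_formula lam Rm : W10 Rm (mscale lam I3) = lam^2 * Qm Rm - 2*lam*mtrace Rm + 3.
Proof. unfold W10, fnorm2, msym, msub, mmul, mtrans, mscale, madd, mtrace, sum3, I3, Qm. simpl. field. Qed.

Lemma inSO3_rels Rm : in_SO3 Rm ->
  rels (Rm 0%nat 0%nat) (Rm 0%nat 1%nat) (Rm 0%nat 2%nat) (Rm 1%nat 0%nat) (Rm 1%nat 1%nat) (Rm 1%nat 2%nat) (Rm 2%nat 0%nat) (Rm 2%nat 1%nat) (Rm 2%nat 2%nat).
Proof. intros [Hm Hd].
  pose proof (Hm 0%nat 0%nat ltac:(lia) ltac:(lia)) as H00.
  pose proof (Hm 1%nat 1%nat ltac:(lia) ltac:(lia)) as H11.
  pose proof (Hm 2%nat 2%nat ltac:(lia) ltac:(lia)) as H22.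
  pose proof (Hm 0%nat 1%nat ltac:(lia) ltac:(lia)) as H01.
  pose proof (Hm 0%nat 2%nat ltac:(lia) ltac:(lia)) as H02.
  pose proof (Hm 1%nat 2%nat ltac:(lia) ltac:(lia)) as H12.
  unfold mmul, mtrans, sum3, I3 in *; simpl in H00, H11, H22, H01, H02, H12.
  unfold det3 in Hd.
  apply rels_of; lra.
Qed.

Lemma Tnonneg T X1 X2 X3 s1 s2 s3 : T*X1 = s1^2 -> T*X2 = s2^2 -> T*X3 = s3^2 -> T+X1+X2+X3 = 4 -> 0 <= T.
Proof. intros H1 H2 H3 H4. destruct (Rle_lt_dec 0 T) as [h|h]; [exact h|].
  assert (0 <= s1^2) by nra. assert (0 <= s2^2) by nra. assert (0 <= s3^2) by nra.
  destruct (Rle_lt_dec X1 0); [destruct (Rle_lt_dec X2 0); [destruct (Rle_lt_dec X3 0)|]|]; nra.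
Qed.

Lemma SO3_trace Rm : in_SO3 Rm -> Qm Rm = (3 + (mtrace Rm)^2 - 2*mtrace Rm)/2 /\ -1 <= mtrace Rm <= 3.
Proof. intro H. pose proof (inSO3_rels Rm H) as Hr. pose proof (qid _ _ _ _ _ _ _ _ _ Hr) as Q.
  unfold Qm, mtrace, sum3. cbv beta.
  destruct Hr as [[C0 [C1 [C2 _]]] _].
  destruct Q as [Q1 [Q2 [Q3 [_ [_ [_ [_ [_ [_ Q]]]]]]]]].
  split; [exact Q|]. split.
  - assert (0 <= 1 + (Rm 0%nat 0%nat) + (Rm 1%nat 1%nat) + (Rm 2%nat 2%nat)); [|lra].
    eapply Tnonneg; [exact Q1|exact Q2|exact Q3|ring].
  - assert ((Rm 0%nat 0%nat) <= 1) by nra. assert ((Rm 1%nat 1%nat) <= 1) by nra. assert ((Rm 2%nat 2%nat) <= 1) by nra. lra.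
Qed.

Lemma W_SO3 lam Rm : in_SO3 Rm -> W10 Rm (mscale lam I3) = fT lam (mtrace Rm).
Proof. intro H. rewrite W_formula. destruct (SO3_trace Rm H) as [Q _]. rewrite Q. unfold fT. field. Qed.

Lemma tr3_I Rm : in_SO3 Rm -> mtrace Rm = 3 -> mat_eq Rm I3.
Proof. intros H Ht. pose proof (inSO3_rels Rm H) as Hr.
  destruct Hr as [[C0 [C1 [C2 _]]] _]. unfold mtrace, sum3 in Ht; simpl in Ht.
  assert ((Rm 0%nat 0%nat) <= 1) by nra. assert ((Rm 1%nat 1%nat) <= 1) by nra. assert ((Rm 2%nat 2%nat) <= 1) by nra.
  assert (E0 : (Rm 0%nat 0%nat) = 1) by lra. assert (E1 : (Rm 1%nat 1%nat) = 1) by lra. assert (E2 : (Rm 2%nat 2%nat) = 1) by lra.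
  rewrite E0 in C0. rewrite E1 in C1. rewrite E2 in C2.
  intros i j Hi Hj. destruct i as [|[|[|i]]]; try lia; destruct j as [|[|[|j]]]; try lia;
   unfold I3; simpl; try assumption; nra.
Qed.

Lemma build_u x0 x1 x2 p01 p02 p12 : 0 < x0 -> p01^2 = x0*x1 -> p02^2 = x0*x2 -> x0*p12 = p01*p02 ->
  exists u0 u1 u2, 4*u0^2 = x0 /\ 4*u1^2 = x1 /\ 4*u2^2 = x2 /\ 4*u0*u1 = p01 /\ 4*u0*u2 = p02 /\ 4*u1*u2 = p12.
Proof. intros H0 H1 H2 H3.
  assert (Hs : sqrt x0 * sqrt x0 = x0) by (apply sqrt_sqrt; lra).
  assert (Hp : 0 < sqrt x0) by (apply sqrt_lt_R0; lra).
  set (s := sqrt x0) in *.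
  exists (s/2), (p01/(2*s)), (p02/(2*s)).
  repeat split.
  - rewrite <- Hs. field.
  - apply Rmult_eq_reg_l with x0; [|lra]. rewrite <- H1. rewrite <- Hs at 1. field. lra.
  - apply Rmult_eq_reg_l with x0; [|lra]. rewrite <- H2. rewrite <- Hs at 1. field. lra.
  - field. lra.
  - field. lra.
  - apply Rmult_eq_reg_l with x0; [|lra]. rewrite H3. rewrite <- Hs at 1. field. lra.
Qed.


Lemma trm1_ht Rm : in_SO3 Rm -> mtrace Rm = -1 ->
  exists u0 u1 u2 : R, u0 ^ 2 + u1 ^ 2 + u2 ^ 2 = 1 /\ mat_eq Rm (half_turn u0 u1 u2).
Proof. intros H Ht. pose proof (inSO3_rels Rm H) as Hr. pose proof (qid _ _ _ _ _ _ _ _ _ Hr) as Q.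
  unfold mtrace, sum3 in Ht; cbv beta in Ht.
  destruct Q as [Q1 [Q2 [Q3 [Q4 [Q5 [Q6 [Q7 [Q8 [Q9 _]]]]]]]]].
  replace (1 + (Rm 0%nat 0%nat) + (Rm 1%nat 1%nat) + (Rm 2%nat 2%nat)) with 0 in Q1, Q2, Q3 by lra.
  assert (S1 : (Rm 2%nat 1%nat) = (Rm 1%nat 2%nat)) by nra. assert (S2 : (Rm 0%nat 2%nat) = (Rm 2%nat 0%nat)) by nra. assert (S3 : (Rm 1%nat 0%nat) = (Rm 0%nat 1%nat)) by nra.
  assert (Hsum : (1 + (Rm 0%nat 0%nat) - (Rm 1%nat 1%nat) - (Rm 2%nat 2%nat)) + (1 - (Rm 0%nat 0%nat) + (Rm 1%nat 1%nat) - (Rm 2%nat 2%nat)) + (1 - (Rm 0%nat 0%nat) - (Rm 1%nat 1%nat) + (Rm 2%nat 2%nat)) = 4) by lra.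
  destruct (Rlt_le_dec 0 (1 + (Rm 0%nat 0%nat) - (Rm 1%nat 1%nat) - (Rm 2%nat 2%nat))) as [X0|X0].
  { destruct (build_u _ _ _ _ _ _ X0 (eq_sym Q4) (eq_sym Q5) Q7) as [u0 [u1 [u2 [U0 [U1 [U2 [U01 [U02 U12]]]]]]]].
    exists u0, u1, u2. split; [lra|].
    intros i j Hi Hj. destruct i as [|[|[|i]]]; try lia; destruct j as [|[|[|j]]]; try lia;
    unfold half_turn, I3; simpl; lra. }
  destruct (Rlt_le_dec 0 (1 - (Rm 0%nat 0%nat) + (Rm 1%nat 1%nat) - (Rm 2%nat 2%nat))) as [X1|X1].
  { assert (P1 : ((Rm 0%nat 1%nat) + (Rm 1%nat 0%nat))^2 = (1 - (Rm 0%nat 0%nat) + (Rm 1%nat 1%nat) - (Rm 2%nat 2%nat)) * (1 + (Rm 0%nat 0%nat) - (Rm 1%nat 1%nat) - (Rm 2%nat 2%nat))) by lra.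
    destruct (build_u _ _ _ _ _ _ X1 P1 (eq_sym Q6) Q8) as [u1 [u0 [u2 [U1 [U0 [U2 [U01 [U12 U02]]]]]]]].
    exists u0, u1, u2. split; [lra|].
    intros i j Hi Hj. destruct i as [|[|[|i]]]; try lia; destruct j as [|[|[|j]]]; try lia;
    unfold half_turn, I3; simpl; lra. }
  assert (X2 : 0 < 1 - (Rm 0%nat 0%nat) - (Rm 1%nat 1%nat) + (Rm 2%nat 2%nat)) by lra.
  { assert (P1 : ((Rm 0%nat 2%nat) + (Rm 2%nat 0%nat))^2 = (1 - (Rm 0%nat 0%nat) - (Rm 1%nat 1%nat) + (Rm 2%nat 2%nat)) * (1 + (Rm 0%nat 0%nat) - (Rm 1%nat 1%nat) - (Rm 2%nat 2%nat))) by lra.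
    assert (P2 : ((Rm 1%nat 2%nat) + (Rm 2%nat 1%nat))^2 = (1 - (Rm 0%nat 0%nat) - (Rm 1%nat 1%nat) + (Rm 2%nat 2%nat)) * (1 - (Rm 0%nat 0%nat) + (Rm 1%nat 1%nat) - (Rm 2%nat 2%nat))) by lra.
    destruct (build_u _ _ _ _ _ _ X2 P1 P2 Q9) as [u2 [u0 [u1 [U2 [U0 [U1 [U02 [U12 U01]]]]]]]].
    exists u0, u1, u2. split; [lra|].
    intros i j Hi Hj. destruct i as [|[|[|i]]]; try lia; destruct j as [|[|[|j]]]; try lia;
    unfold half_turn, I3; simpl; lra. }
Qed.

Lemma mateq_tr A B : mat_eq A B -> (in_SO3 A <-> in_SO3 B) /\ mtrace A = mtrace B /\ Qm A = Qm B.
Proof. intro H.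
  assert (E00 := H 0%nat 0%nat ltac:(lia) ltac:(lia)). assert (E01 := H 0%nat 1%nat ltac:(lia) ltac:(lia)).
  assert (E02 := H 0%nat 2%nat ltac:(lia) ltac:(lia)). assert (E10 := H 1%nat 0%nat ltac:(lia) ltac:(lia)).
  assert (E11 := H 1%nat 1%nat ltac:(lia) ltac:(lia)). assert (E12 := H 1%nat 2%nat ltac:(lia) ltac:(lia)).
  assert (E20 := H 2%nat 0%nat ltac:(lia) ltac:(lia)). assert (E21 := H 2%nat 1%nat ltac:(lia) ltac:(lia)).
  assert (E22 := H 2%nat 2%nat ltac:(lia) ltac:(lia)).
  split; [|split].
  - unfold in_SO3, mat_eq, det3. split; intros [Hm Hd]; split.
    + intros i j Hi Hj. specialize (Hm i j Hi Hj).
      destruct i as [|[|[|i]]]; try lia; destruct j as [|[|[|j]]]; try lia;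
      unfold mmul, mtrans, sum3 in *; rewrite ?E00, ?E01, ?E02, ?E10, ?E11, ?E12, ?E20, ?E21, ?E22 in Hm; exact Hm.
    + rewrite ?E00, ?E01, ?E02, ?E10, ?E11, ?E12, ?E20, ?E21, ?E22 in Hd; exact Hd.
    + intros i j Hi Hj. specialize (Hm i j Hi Hj).
      destruct i as [|[|[|i]]]; try lia; destruct j as [|[|[|j]]]; try lia;
      unfold mmul, mtrans, sum3 in *; rewrite ?E00, ?E01, ?E02, ?E10, ?E11, ?E12, ?E20, ?E21, ?E22; exact Hm.
    + rewrite ?E00, ?E01, ?E02, ?E10, ?E11, ?E12, ?E20, ?E21, ?E22; exact Hd.
  - unfold mtrace, sum3. rewrite E00, E11, E22. reflexivity.
  - unfold Qm. rewrite E00, E01, E02, E10, E11, E12, E20, E21, E22. reflexivity.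
Qed.

Lemma ht_SO3 u0 u1 u2 : u0^2+u1^2+u2^2 = 1 -> in_SO3 (half_turn u0 u1 u2).
Proof. intros Hn. assert (Hn' : u0^2 = 1 - u1^2 - u2^2) by lra. split.
 - intros i j Hi Hj. destruct i as [|[|[|i]]]; try lia; destruct j as [|[|[|j]]]; try lia;
   unfold mmul, mtrans, sum3, half_turn, I3; simpl; ring [Hn'].
 - unfold det3, half_turn, I3; simpl; ring [Hn'].
Qed.

Lemma ht_tr u0 u1 u2 : mtrace (half_turn u0 u1 u2) = 2*(u0^2+u1^2+u2^2) - 3.
Proof. unfold mtrace, sum3, half_turn, I3; simpl; ring. Qed.

Lemma I3_SO3 : in_SO3 I3.
Proof. split.
 - intros i j Hi Hj. destruct i as [|[|[|i]]]; try lia; destruct j as [|[|[|j]]]; try lia;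
   unfold mmul, mtrans, sum3, I3; simpl; ring.
 - unfold det3, I3; simpl; ring.
Qed.

Lemma I3_tr : mtrace I3 = 3.
Proof. unfold mtrace, sum3, I3; simpl; ring. Qed.

Definition Rz (c s : R) : Mat3 := fun i j =>
  match i, j with
  | 0%nat, 0%nat => c | 0%nat, 1%nat => - s | 1%nat, 0%nat => s | 1%nat, 1%nat => c
  | 2%nat, 2%nat => 1 | _, _ => 0 end.

Lemma Rz_SO3 c s : c^2 + s^2 = 1 -> in_SO3 (Rz c s).
Proof. intros Hn. assert (Hn' : c^2 = 1 - s^2) by lra. split.
 - intros i j Hi Hj. destruct i as [|[|[|i]]]; try lia; destruct j as [|[|[|j]]]; try lia;
   unfold mmul, mtrans, sum3, Rz, I3; simpl; ring [Hn'].
 - unfold det3, Rz; simpl; ring [Hn'].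
Qed.

Lemma Rz_tr c s : mtrace (Rz c s) = 2*c + 1.
Proof. unfold mtrace, sum3, Rz; simpl; ring. Qed.


Lemma crit_char lam q : critical_S3 (Gfun lam) q <->
  on_S3 q /\ (8*lam*(lam*(4*q0 q^2 - 2) - 2) * q0 q = 0 \/ (q1 q = 0 /\ q2 q = 0 /\ q3 q = 0)).
Proof. split.
  - intros [Hs Hd]. split; [exact Hs|].
    assert (Kv : forall v, dot4 q v = 0 -> q0 v <> 0 -> 8*lam*(lam*(4*q0 q^2 - 2) - 2) * q0 q = 0).
    { intros v Hv H0. pose proof (uniqueness_limite _ _ _ _ (Hd v Hv) (deriv_G lam q v Hs Hv)) as U.
      symmetry in U. apply Rmult_integral in U. destruct U; [assumption|contradiction]. }
    destruct (Req_dec (q1 q) 0) as [B|B].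
    2:{ left. apply (Kv (mkR4 (q1 q) (- q0 q) 0 0)); unfold dot4; simpl; [ring|exact B]. }
    destruct (Req_dec (q2 q) 0) as [C|C].
    2:{ left. apply (Kv (mkR4 (q2 q) 0 (- q0 q) 0)); unfold dot4; simpl; [ring|exact C]. }
    destruct (Req_dec (q3 q) 0) as [D|D].
    2:{ left. apply (Kv (mkR4 (q3 q) 0 0 (- q0 q))); unfold dot4; simpl; [ring|exact D]. }
    right; auto.
  - intros [Hs HK]. split; [exact Hs|]. intros v Hv.
    pose proof (deriv_G lam q v Hs Hv) as D.
    replace (8 * lam * (lam * (4 * q0 q ^ 2 - 2) - 2) * q0 q * q0 v) with 0 in D; [exact D|].
    destruct HK as [K|[B [C E]]].
    + rewrite K. ring.
    + unfold on_S3, dot4 in *. rewrite B, C, E in *.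
      assert (q0 q * q0 v = 0) by lra. 
      replace (8 * lam * (lam * (4 * q0 q ^ 2 - 2) - 2) * q0 q * q0 v) with
        (8 * lam * (lam * (4 * q0 q ^ 2 - 2) - 2) * (q0 q * q0 v)) by ring.
      rewrite H. ring.
Qed.

Lemma sq_pm a s : 0 <= s -> a^2 = s^2 -> a = s \/ a = - s.
Proof. intros Hs H. assert ((a - s)*(a + s) = 0) by lra.
  apply Rmult_integral in H0. destruct H0; [left|right]; lra. Qed.

Lemma sq0 x : x^2 = 0 -> x = 0.
Proof. intro H. nra. Qed.

Lemma R4_eta q : q = mkR4 (q0 q) (q1 q) (q2 q) (q3 q).
Proof. destruct q; reflexivity. Qed.

Theorem mainTheorem12 (lam : R) (hlam : 0 < lam) :
  let D := mscale lam I3 in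
  let G := Gfun lam in
  let W := fun Rm => W10 Rm D in
  (* classification of critical points *)
  (forall q : R4,
     critical_S3 G q <->
     (q = mkR4 1 0 0 0 \/ q = mkR4 (-1) 0 0 0
      \/ (q0 q = 0 /\ q1 q ^ 2 + q2 q ^ 2 + q3 q ^ 2 = 1)
      \/ (1 < lam /\
          (q0 q = sqrt ((lam + 1) / (2 * lam)) \/ q0 q = - sqrt ((lam + 1) / (2 * lam))) /\
          q1 q ^ 2 + q2 q ^ 2 + q3 q ^ 2 = (lam - 1) / (2 * lam)))) /\
  (* critical values *)
  G (mkR4 1 0 0 0) = 3 * (lam - 1) ^ 2 /\
  G (mkR4 (-1) 0 0 0) = 3 * (lam - 1) ^ 2 /\
  (forall a b c : R, a ^ 2 + b ^ 2 + c ^ 2 = 1 ->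
     G (mkR4 0 a b c) = 3 * lam ^ 2 + 2 * lam + 3) /\
  (1 < lam -> forall a b c : R, a ^ 2 + b ^ 2 + c ^ 2 = (lam - 1) / (2 * lam) ->
     G (mkR4 (sqrt ((lam + 1) / (2 * lam))) a b c) = (lam - 1) ^ 2 /\
     G (mkR4 (- sqrt ((lam + 1) / (2 * lam))) a b c) = (lam - 1) ^ 2) /\
  (* (i) global maxima *)
  (forall q : R4, is_gmax_S3 G q <-> (on_S3 q /\ q0 q = 0)) /\
  (forall Rm : Mat3, is_gmax_SO3 W Rm <->
     exists u0 u1 u2 : R, u0 ^ 2 + u1 ^ 2 + u2 ^ 2 = 1 /\ mat_eq Rm (half_turn u0 u1 u2)) /\
  (* (ii) lambda <= 1 *)
  (lam <= 1 ->
     (forall q : R4, is_gmin_S3 G q <-> (q = mkR4 1 0 0 0 \/ q = mkR4 (-1) 0 0 0)) /\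
     (forall Rm : Mat3, is_gmin_SO3 W Rm <-> mat_eq Rm I3)) /\
  (* (iii) lambda > 1 *)
  (1 < lam ->
     (forall q : R4, is_gmin_S3 G q <->
        ((q0 q = sqrt ((lam + 1) / (2 * lam)) \/ q0 q = - sqrt ((lam + 1) / (2 * lam))) /\
         q1 q ^ 2 + q2 q ^ 2 + q3 q ^ 2 = (lam - 1) / (2 * lam))) /\
     (forall Rm : Mat3, is_gmin_SO3 W Rm <-> (in_SO3 Rm /\ mtrace Rm = 1 + 2 / lam))).
Proof.
  intros D G W.
  assert (HG : forall q, on_S3 q -> G q = fT lam (4*q0 q^2 - 1)) by (intros; apply on_S3_G; auto).
  assert (HW : forall Rm, in_SO3 Rm -> W Rm = fT lam (mtrace Rm)) by (intros; apply W_SO3; auto).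
  assert (Hq0 : forall q, on_S3 q -> -1 <= 4*q0 q^2 - 1 <= 3).
  { intros q Hq. unfold on_S3 in Hq. nra. }
  assert (Htr : forall Rm, in_SO3 Rm -> -1 <= mtrace Rm <= 3) by (intros; apply SO3_trace; auto).
  assert (Fmax : forall t, -1 <= t <= 3 -> fT lam t <= fT lam (-1) /\ (fT lam (-1) <= fT lam t -> t = -1)).
  { intros t Ht. assert (E : fT lam (-1) - fT lam t = (1+t)*(lam^2*(3-t)/2 + 2*lam)) by (unfold fT; field).
    assert (P : 0 < lam^2*(3-t)/2 + 2*lam) by nra.
    split; [nra|]. intro Hle. assert ((1+t)*(lam^2*(3-t)/2 + 2*lam) = 0) by nra.
    apply Rmult_integral in H. destruct H; lra. }
  assert (Fmin1 : lam <= 1 -> forall t, -1 <= t <= 3 -> fT lam 3 <= fT lam t /\ (fT lam t <= fT lam 3 -> t = 3)).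
  { intros Hl t Ht. assert (E : fT lam t - fT lam 3 = (3-t)*(lam*(4 - lam*(t+1))/2)) by (unfold fT; field).
    assert (P : 0 <= lam*(4 - lam*(t+1))/2) by nra.
    split; [nra|]. intro Hle. assert ((3-t)*(lam*(4 - lam*(t+1))/2) = 0) by nra.
    apply Rmult_integral in H. destruct H as [H|H]; [lra|].
    assert (4 - lam*(t+1) = 0) by nra. nra. }
  set (ts := 1 + 2/lam).
  assert (Fmin2 : forall t, fT lam t - fT lam ts = lam^2/2*(t - ts)^2) by (intros; unfold fT, ts; field; lra).
  assert (Fmin2' : forall t, fT lam ts <= fT lam t /\ (fT lam t <= fT lam ts -> t = ts)).
  { intro t. specialize (Fmin2 t).
    assert (P : 0 <= lam^2/2*(t-ts)^2) by (apply Rmult_le_pos; [unfold Rdiv; apply Rmult_le_pos; [apply pow2_ge_0|lra]|apply pow2_ge_0]).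
    split; [lra|]. intro Hle.
    assert (Z : lam^2/2*(t - ts)^2 = 0) by lra. apply Rmult_integral in Z. destruct Z as [Z|Z].
    - assert (lam^2 = 0) by lra. apply sq0 in H. lra.
    - apply sq0 in Z. lra. }
  assert (Fts : fT lam ts = (lam - 1)^2) by (unfold fT, ts; field; lra).
  set (k := (lam + 1) / (2*lam)).
  assert (Hk0 : 0 < k) by (unfold k; apply Rdiv_lt_0_compat; lra).
  assert (Hsk : sqrt k ^ 2 = k) by (apply pow2_sqrt; lra).
  assert (Hsk0 : 0 <= sqrt k) by apply sqrt_pos.
  assert (Hkts : 4*k - 1 = ts) by (unfold k, ts; field; lra).
  assert (Hrest : 1 - k = (lam - 1) / (2 * lam)) by (unfold k; field; lra).
  assert (S1 : on_S3 (mkR4 1 0 0 0)) by (unfold on_S3; simpl; ring).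
  assert (S1' : on_S3 (mkR4 (-1) 0 0 0)) by (unfold on_S3; simpl; ring).
  assert (S0 : on_S3 (mkR4 0 1 0 0)) by (unfold on_S3; simpl; ring).
  assert (G1 : G (mkR4 1 0 0 0) = fT lam 3) by (rewrite HG; [cbn [q0]; f_equal; ring|auto]).
  assert (G1' : G (mkR4 (-1) 0 0 0) = fT lam 3) by (rewrite HG; [cbn [q0]; f_equal; ring|auto]).
  split; [|split; [|split; [|split; [|split; [|split; [|split; [|split]]]]]]].
  -
    intro q. unfold G; rewrite crit_char; fold G. split.
    + intros [Hs HK]. destruct HK as [K|[B [C E]]].
      * apply Rmult_integral in K. destruct K as [K|K].
        -- apply Rmult_integral in K. destruct K as [K|K]; [lra|].
           assert (Ha : q0 q ^2 = k) by (unfold k; field_simplify; [|lra]; apply Rmult_eq_reg_l with lam; [|lra]; field_simplify; lra).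
           destruct (Rlt_le_dec 1 lam) as [Hl|Hl].
           ++ right; right; right. split; [exact Hl|]. split.
              ** apply sq_pm; [exact Hsk0|]. rewrite Hsk; exact Ha.
              ** unfold on_S3 in Hs. rewrite <- Hrest. lra.
           ++ assert (k >= 1) by (unfold k; apply Rle_ge; apply Rmult_le_reg_r with (2*lam); [lra|]; field_simplify; lra).
              unfold on_S3 in Hs.
              assert (q1 q ^2 = 0 /\ q2 q ^2 = 0 /\ q3 q^2 = 0) as [B [C E]] by (repeat split; nra).
              assert (q1 q = 0) by (apply sq0; exact B).
              assert (q2 q = 0) by (apply sq0; exact C).
              assert (q3 q = 0) by (apply sq0; exact E).
              assert (q0 q ^2 = 1 ^2) by (rewrite H0, H1, H2 in Hs; lra).
              destruct (sq_pm _ 1 ltac:(lra) H3) as [A|A]; [left|right;left];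
                rewrite (R4_eta q), A, H0, H1, H2; reflexivity.
        -- right; right; left. split; [exact K|]. unfold on_S3 in Hs. rewrite K in Hs. lra.
      * unfold on_S3 in Hs. rewrite B, C, E in Hs.
        assert (q0 q ^2 = 1 ^2) by lra.
        destruct (sq_pm _ 1 ltac:(lra) H) as [A|A]; [left|right;left];
          rewrite (R4_eta q), A, B, C, E; reflexivity.
    + intros [Q|[Q|[[A Hr]|[Hl [A Hr]]]]].
      * subst q. split; [exact S1|]. right; simpl; auto.
      * subst q. split; [exact S1'|]. right; simpl; auto.
      * split; [unfold on_S3; rewrite A; lra|]. left. rewrite A. ring.
      * assert (Ha : q0 q ^ 2 = k) by (destruct A as [A|A]; rewrite A; [exact Hsk|replace ((- sqrt k)^2) with (sqrt k ^2) by ring; exact Hsk]).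
        split; [unfold on_S3; rewrite Ha; fold k in Hr; lra|].
        left. rewrite Ha. unfold k. field. lra.
  - rewrite G1. unfold fT. field.
  - rewrite G1'. unfold fT. field.
  - intros a b c H. rewrite HG; [|unfold on_S3; simpl; lra]. cbn [q0]. unfold fT. field.
  - intros Hl a b c H. fold k in H |- *. split.
    + rewrite HG; [|unfold on_S3; cbn [q0 q1 q2 q3]; rewrite Hsk; lra]. cbn [q0]. rewrite Hsk, Hkts. exact Fts.
    + rewrite HG; [|unfold on_S3; cbn [q0 q1 q2 q3]; replace ((- sqrt k)^2) with (sqrt k ^2) by ring; rewrite Hsk; lra].
      cbn [q0]. replace ((- sqrt k)^2) with (sqrt k ^2) by ring. rewrite Hsk, Hkts. exact Fts.
  -
    intro q. split.
    + intros [Hs Hm]. split; [exact Hs|]. specialize (Hm _ S0). rewrite !HG in Hm by auto.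
      cbn [q0] in Hm. replace (4 * 0 ^ 2 - 1) with (-1) in Hm by ring.
      pose proof (proj2 (Fmax _ (Hq0 q Hs)) Hm). apply sq0. lra.
    + intros [Hs A]. split; [exact Hs|]. intros p Hp. rewrite !HG by auto. rewrite A.
      replace (4 * 0 ^ 2 - 1) with (-1) by ring. apply Fmax; auto.
  -
    intro Rm. split.
    + intros [Hs Hm]. apply trm1_ht; [exact Hs|].
      assert (Hb : in_SO3 (half_turn 1 0 0)) by (apply ht_SO3; ring).
      specialize (Hm _ Hb). rewrite !HW in Hm by auto. rewrite ht_tr in Hm.
      replace (2 * (1 ^ 2 + 0 ^ 2 + 0 ^ 2) - 3) with (-1) in Hm by ring.
      apply (proj2 (Fmax _ (Htr _ Hs)) Hm).
    + intros [u0 [u1 [u2 [Hu He]]]]. destruct (mateq_tr _ _ He) as [Hi [Ht _]].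
      assert (Hs : in_SO3 Rm) by (apply Hi; apply ht_SO3; exact Hu).
      split; [exact Hs|]. intros B HB. rewrite !HW by auto. rewrite Ht, ht_tr, Hu.
      replace (2 * 1 - 3) with (-1) by ring. apply Fmax; auto.
  -
    intro Hl. split.
    + intro q. split.
      * intros [Hs Hm]. specialize (Hm _ S1). rewrite G1 in Hm. rewrite HG in Hm by auto.
        pose proof (proj2 (Fmin1 Hl _ (Hq0 q Hs)) Hm) as T.
        unfold on_S3 in Hs.
        assert (q1 q ^2 = 0 /\ q2 q ^2 = 0 /\ q3 q^2 = 0) as [B [C E]] by (repeat split; nra).
        assert (q1 q = 0) by (apply sq0; exact B).
        assert (q2 q = 0) by (apply sq0; exact C).
        assert (q3 q = 0) by (apply sq0; exact E).
        assert (q0 q ^2 = 1 ^2) by lra.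
        destruct (sq_pm _ 1 ltac:(lra) H2) as [A|A]; [left|right];
          rewrite (R4_eta q), A, H, H0, H1; reflexivity.
      * intros Q. assert (Hs : on_S3 q) by (destruct Q; subst; auto).
        split; [exact Hs|]. intros p Hp. rewrite (HG p Hp).
        assert (G q = fT lam 3) by (destruct Q; subst; auto). rewrite H.
        apply Fmin1; auto.
    + intro Rm. split.
      * intros [Hs Hm]. apply tr3_I; [exact Hs|]. specialize (Hm _ I3_SO3).
        rewrite (HW I3 I3_SO3), (HW Rm Hs) in Hm. rewrite I3_tr in Hm. apply (proj2 (Fmin1 Hl _ (Htr _ Hs)) Hm).
      * intro He. destruct (mateq_tr _ _ He) as [Hi [Ht _]].
        assert (Hs : in_SO3 Rm) by (apply Hi; apply I3_SO3).
        split; [exact Hs|]. intros B HB. rewrite !HW by auto. rewrite Ht, I3_tr.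
        apply Fmin1; auto.
  -
    intro Hl. fold k. split.
    + intro q. split.
      * intros [Hs Hm].
        assert (Hk1 : 0 <= 1 - k) by (rewrite Hrest; apply Rle_mult_inv_pos; lra).
        set (p := mkR4 (sqrt k) (sqrt (1 - k)) 0 0).
        assert (Hp : on_S3 p) by (unfold on_S3, p; cbn [q0 q1 q2 q3]; rewrite Hsk, pow2_sqrt by lra; ring).
        specialize (Hm _ Hp). rewrite !HG in Hm by auto. unfold p in Hm; cbn [q0] in Hm.
        rewrite Hsk, Hkts in Hm. pose proof (proj2 (Fmin2' _) Hm) as T.
        assert (Ha : q0 q ^2 = k) by lra.
        split.
        -- apply sq_pm; [exact Hsk0|]. rewrite Hsk; exact Ha.
        -- unfold on_S3 in Hs. rewrite <- Hrest. lra.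
      * intros [A Hr].
        assert (Ha : q0 q ^ 2 = k) by (destruct A as [A|A]; rewrite A; [exact Hsk|replace ((- sqrt k)^2) with (sqrt k ^2) by ring; exact Hsk]).
        assert (Hs : on_S3 q) by (unfold on_S3; rewrite Ha; rewrite <- Hrest in Hr; lra).
        split; [exact Hs|]. intros p Hp. rewrite !HG by auto. rewrite Ha, Hkts. apply Fmin2'.
    + intro Rm. split.
      * intros [Hs Hm]. split; [exact Hs|].
        assert (Hc : (1/lam)^2 <= 1) by (apply Rmult_le_reg_r with (lam^2); [nra|]; field_simplify; nra).
        set (B := Rz (1/lam) (sqrt (1 - (1/lam)^2))).
        assert (HB : in_SO3 B) by (apply Rz_SO3; rewrite pow2_sqrt by lra; ring).
        specialize (Hm _ HB). rewrite !HW in Hm by auto. unfold B in Hm. rewrite Rz_tr in Hm.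
        replace (2 * (1 / lam) + 1) with ts in Hm by (unfold ts; field; lra).
        apply (proj2 (Fmin2' _) Hm).
      * intros [Hs Ht]. split; [exact Hs|]. intros B HB. rewrite !HW by auto. rewrite Ht. fold ts. apply Fmin2'.
Qed.
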